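(* In the setting described in the context, $\mathbb E\left[\sum_{k\in U}f_\tau(k)w_k\right]\ge(1-e^{-1})R/4$, where the expectation is over the random experiment for SA2 and $R$ is the maximum total reward of a feasible service placement.
   Context: An SPSC instance: finite sets $S$ (services), $V$ (nodes), $U$ (users); sizes $s_i>0$; capacities $c_j>0$; for each user $k$ a service $i_k\in S$, a set $T_k\subseteq V$, a reward $w_k>0$. A placement $X=\{X_i\subseteq V\}$ is feasible iff $\sum_is_i\mathbf 1[j\in X_i]\le c_j$ for all $j$; its total reward is $\sum_kw_k\mathbf 1[T_k\cap X_{i_k}\ne\emptyset]$. Let $\{x_{ij}\},\{y_k\}$ be an optimal solution of the LP with nonnegative variables: maximize $\sum_ky_kw_k$ s.t. $y_k\le\sum_{j\in T_k}x_{i_kj}$, $y_k\le1$; $\sum_ix_{ij}s_i\le c_j$; $x_{ij}=0$ if $s_i>c_j$; $0\le x_{ij}\le1$. Let $\beta:=1/4,\gamma:=1/2,\delta:=1/4$, $\mathbb N=\{1,2,\dots\}$. For $j\in V$: $P_j^\oplus:=\{i:c_j/2<s_i\le c_j\}$, $P_j^\ominus:=\{i:c_j/4<s_i\le c_j/2\}$, $P_j^q:=\{i:\gamma^qc_j\beta<s_i\le\gamma^{q-1}c_j\beta\}$ ($q\in\mathbb N$); $d_j^q:=\sum_{i\in P_j^q}x_{ij}$ for $q\in\mathbb N\cup\{\oplus,\ominus\}$; $v_j:=\delta c_j/\sum_{i:s_i\le c_j\beta}s_ix_{ij}$; $n_j^q:=\lceil v_jd_j^q\rceil$; $h_j:=d_j^\ominus$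 if $d_j^\ominus<2$, else $d_j^\ominus/2$. A construction map $\zeta:V\to\{1,2,3\}$ has slot set $\Lambda(\zeta)$ (slot $\sigma$ has node $\nu(\sigma)$, class $\kappa(\sigma)$): for each $j$, one slot of class $\oplus$ if $\zeta(j)=1$; two slots of class $\ominus$ if $\zeta(j)=2$; for each $q\in\mathbb N$, $n_j^q$ slots of class $q$ if $\zeta(j)=3$; no other slots on $j$. A slot allocation of $\Lambda$ is $\tau:\Lambda\to S$ with $\tau(\sigma)\in P^{\kappa(\sigma)}_{\nu(\sigma)}$; $X^\tau_i:=\{j:\exists\sigma,\nu(\sigma)=j,\tau(\sigma)=i\}$; $f_\tau(k):=\mathbf 1[T_k\cap X^\tau_{i_k}\ne\emptyset]$. Random experiment: $\zeta(j)$ independent over $j$, equal to $1,2,3$ with probabilities $\delta d_j^\oplus,\ \delta h_j,\ 1-\delta d_j^\oplus-\delta h_j$; given $\zeta$, each slot $\sigma\in\Lambda(\zeta)$ independently gets $\tau(\sigma)=i$ with probability $x_{i\nu(\sigma)}/d^{\kappa(\sigma)}_{\nu(\sigma)}$, $i\in P^{\kappa(\sigma)}_{\nu(\sigma)}$. *)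

(* Defs.v *)
From HB Require Import structures.
From mathcomp Require Import all_boot all_order all_algebra.
From mathcomp Require Import reals sequences exp.
Set Implicit Arguments. Unset Strict Implicit. Unset Printing Implicit Defensive.
Import Order.TTheory GRing.Theory Num.Theory.
Local Open Scope ring_scope.

(* Size classes: oplus, ominus, and q in N = {1,2,...} (Num q, q >= 1 used). *)
Inductive cls := Plus | Minus | Num of nat.

(* A slot: (node, class, index among the slots of that class on that node). *)
Definition slot (V : Type) := (V * cls * nat)%type.

Section SPSC.
Variables (R : realType) (S V U : finType).
Variables (s : S -> R) (c : V -> R) (ik : U -> S) (T : U -> {set V}) (w : U -> R).

Definition beta : R := 1 / 4.
Definition gamma : R := 1 / 2.
Definition delta : R := 1 / 4.

Definition placement := {ffun S -> {set V}}.

Definition feasible (X : placement) : bool :=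
  [forall j : V, \sum_(i : S) s i * (j \in X i)%:R <= c j].

Definition reward (X : placement) : R :=
  \sum_(k : U) w k * (T k :&: X (ik k) != set0)%:R.

(* maximum total reward of a feasible placement (the empty placement is
   feasible with reward 0, so taking the max together with 0 is harmless) *)
Definition OPT : R := \big[Num.max/0]_(X : placement | feasible X) reward X.

Definition LP_feasible (x : S -> V -> R) (y : U -> R) : Prop :=
  (forall k, 0 <= y k) /\
  (forall k, y k <= \sum_(j in T k) x (ik k) j) /\
  (forall k, y k <= 1) /\
  (forall j, \sum_(i : S) x i j * s i <= c j) /\
  (forall i j, c j < s i -> x i j = 0) /\
  (forall i j, 0 <= x i j <= 1).

Definition LP_obj (y : U -> R) : R := \sum_(k : U) y k * w k.

Definition LP_optimal (x : S -> V -> R) (y : U -> R) : Prop :=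
  LP_feasible x y /\
  (forall x' y', LP_feasible x' y' -> LP_obj y' <= LP_obj y).

Variable (x : S -> V -> R).

Definition inP (j : V) (cl : cls) (i : S) : bool :=
  match cl with
  | Plus => (c j / 2 < s i) && (s i <= c j)
  | Minus => (c j / 4 < s i) && (s i <= c j / 2)
  | Num q => (gamma ^+ q * c j * beta < s i) && (s i <= gamma ^+ q.-1 * c j * beta)
  end.

Definition d (j : V) (cl : cls) : R := \sum_(i | inP j cl i) x i j.

Definition vv (j : V) : R :=
  delta * c j / \sum_(i | s i <= c j * beta) s i * x i j.

Definition nslots (j : V) (q : nat) : nat := `|Num.ceil (vv j * d j (Num q))|%N.

Definition h (j : V) : R := if d j Minus < 2 then d j Minus else d j Minus / 2.

(* Construction map zeta : V -> {1,2,3}, encoded by 'I_3 (value k <-> k+1). *)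
Definition cmap := {ffun V -> 'I_3}.

Definition pzeta (j : V) (k : 'I_3) : R :=
  match val k with
  | 0 => delta * d j Plus
  | 1 => delta * h j
  | _ => 1 - delta * d j Plus - delta * h j
  end.

Definition Pr_zeta (z : cmap) : R := \prod_(j : V) pzeta j (z j).

(* Q : number of classes q considered (all q <= Q); used with a Q beyond which
   every n_j^q vanishes, so that this is the full slot set Lambda(zeta). *)
Variable Q : nat.

Definition slots_at (j : V) (k : 'I_3) : seq (slot V) :=
  match val k with
  | 0 => [:: (j, Plus, 0%N)]
  | 1 => [:: (j, Minus, 0%N); (j, Minus, 1%N)]
  | _ => flatten [seq [seq (j, Num q, t) | t <- iota 0 (nslots j q)] | q <- iota 1 Q]
  end.

Definition Lambda (z : cmap) : seq (slot V) :=
  flatten [seq slots_at j (z j) | j <- enum V].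

Definition snode (sg : slot V) : V := sg.1.1.
Definition scls (sg : slot V) : cls := sg.1.2.

Definition pslot (sg : slot V) (i : S) : R :=
  if inP (snode sg) (scls sg) i then x i (snode sg) / d (snode sg) (scls sg) else 0.

Definition alloc (z : cmap) := {ffun 'I_(size (Lambda z)) -> S}.

Definition slot_of (z : cmap) (m : 'I_(size (Lambda z))) : slot V :=
  tnth (in_tuple (Lambda z)) m.

Definition Xtau (z : cmap) (tau : alloc z) (i : S) : {set V} :=
  [set j | [exists m, (snode (slot_of m) == j) && (tau m == i)]].

Definition ftau (z : cmap) (tau : alloc z) (k : U) : bool :=
  T k :&: Xtau tau (ik k) != set0.

Definition Pr_tau (z : cmap) (tau : alloc z) : R :=
  \prod_(m : 'I_(size (Lambda z))) pslot (slot_of m) (tau m).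

Definition gain (z : cmap) (tau : alloc z) : R :=
  \sum_(k : U) (ftau tau k)%:R * w k.

Definition expected_gain : R :=
  \sum_(z : cmap) Pr_zeta z * \sum_(tau : alloc z) Pr_tau tau * gain tau.

End SPSC.

(* Main.v *)
Require Import Defs.
From HB Require Import structures.
From mathcomp Require Import all_boot all_order all_algebra interval_inference.
From mathcomp Require Import reals sequences exp convex.
From mathcomp Require Import ring lra.
Import Order.TTheory GRing.Theory Num.Theory.
Local Open Scope ring_scope.
Section Num.
Variable R : realType.

Lemma chord (l a : R) : 0 <= l -> l <= 1 -> expR (l * a) <= l * expR a + (1 - l).
Proof.
move=> l0 l1.
have := @convex_expR R (Itv01 l0 l1) a 0.
rewrite !convRE /= expR0 mulr0 addr0 mulr1.
by [].
Qed.

Lemma expR_lb (a b : R) (n : nat) : 0 <= a -> b = a * n%:R -> (1 + a) ^+ n <= expR b.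
Proof.
move=> a0 ->; rewrite expRM_natr; apply: lerXn2r.
- by rewrite nnegrE; lra.
- by rewrite nnegrE; exact: expR_ge0.
- exact: expR_ge1Dx.
Qed.

Lemma expR_lbN (a b : R) (n : nat) : 0 <= a <= 1 -> b = a * n%:R -> (1 - a) ^+ n <= expR (- b).
Proof.
move=> /andP[a0 a1] ->; rewrite -mulNr expRM_natr; apply: lerXn2r.
- by rewrite nnegrE; lra.
- by rewrite nnegrE; exact: expR_ge0.
- have := expR_ge1Dx (- a); lra.
Qed.

Lemma inv_le (a b : R) : 0 < b -> b <= a -> a^-1 <= b^-1.
Proof.
move=> b0 ba; rewrite lef_pV2 ?posrE //; lra.
Qed.

Lemma E_half : expR (- (1/2)) <= 5/8 :> R.
Proof.
have h : (1 + 1/8) ^+ 4 <= expR (1/2) :> R by apply: (@expR_lb (1/8)) => //; lra.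
rewrite expRN.
have -> : (5/8 : R) = (8/5)^-1 by lra.
apply: inv_le; lra.
Qed.

Lemma final_num (y : R) : 0 <= y -> y <= 1 ->
  (1 - expR (-1)) / 4 * y <= 1 - expR (- (3/16) * y).
Proof.
move=> y0 y1.
have hc := @chord y (- (3/16)) y0 y1.
rewrite mulrC in hc.
have h1 : (1 + 3/64) ^+ 4 <= expR (3/16) :> R by apply: (@expR_lb (3/64)) => //; lra.
have h2 : (1 - 1/8) ^+ 8 <= expR (-1) :> R by apply: (@expR_lbN (1/8)) => //; lra.
have h3 : expR (- (3/16)) <= ((1 + 3/64) ^+ 4)^-1 :> R.
  rewrite expRN; apply: inv_le; [lra | exact: h1].
have h4 : ((1 + 3/64) ^+ 4)^-1 * (1 + 3/64) ^+ 4 = 1 :> R.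
  by rewrite mulVf //; lra.
have h5 : ((1 + 3/64) ^+ 4)^-1 <= 1 - (1 - (1 - 1/8) ^+ 8) / 4 :> R by lra.
nra.
Qed.

Lemma small_num (P v : R) : 0 < v -> 1 <= 4 * v * P -> 1/4 + 1/(8*v) <= P ->
  3/16 <= P * (1 - expR (- v)).
Proof.
move=> v0 h1 h2.
have P0 : 0 <= P by nra.
have E := E_half.
case: (lerP v (1/2)) => hv.
- have hc := @chord (2 * v) (- (1/2)).
  have -> : - v = 2 * v * (- (1/2)) by lra.
  have : 1 - expR (2 * v * - (1 / 2)) >= 3/4 * v.
    have := hc ltac:(lra) ltac:(lra); nra.
  nra.
- have hE : expR (- v) = expR (- (1/2)) * expR (- (v - 1/2)).
    by rewrite -expRD; congr expR; lra.
  have hi : expR (- (v - 1/2)) <= (v + 1/2)^-1.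
    rewrite expRN; apply: inv_le; first lra.
    have := expR_ge1Dx (v - 1/2); lra.
  have hw : 0 < (v + 1/2)^-1 by rewrite invr_gt0; lra.
  have hw2 : (v + 1/2)^-1 * (v + 1/2) = 1 by rewrite mulVf //; lra.
  have hv2 : (8 * v)^-1 * (8 * v) = 1 by rewrite mulVf //; lra.
  have h3 : expR (- v) <= 5/8 * (v + 1/2)^-1.
    rewrite hE; apply: ler_pM => //; exact: expR_ge0.
  rewrite -[1/(8*v)]mul1r in h2.
  nra.
Qed.
End Num.

Section Main.
Variables (R : realType) (S V U : finType).
Variables (s : S -> R) (c : V -> R) (ik : U -> S) (T : U -> {set V}) (w : U -> R).
Hypotheses (s_pos : forall i, 0 < s i) (c_pos : forall j, 0 < c j) (w_pos : forall k, 0 < w k).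
Variables (x : S -> V -> R) (y : U -> R).
Hypothesis xy_opt : LP_optimal s c ik T w x y.
Variable Q : nat.
Hypothesis HQ : forall (j : V) (q : nat), (Q < q)%N -> nslots s c x j q = 0%N.

Local Notation dd := (d s c x).
Local Notation inP' := (inP s c).
Local Notation ps := (pslot s c x).
Local Notation pz := (pzeta s c x).
Local Notation hh := (h s c x).

Lemma x_ge0 i j : 0 <= x i j.
Proof. by case: xy_opt => [[_ [_ [_ [_ [_ H]]]]] _]; case/andP: (H i j). Qed.
Lemma x_le1 i j : x i j <= 1.
Proof. by case: xy_opt => [[_ [_ [_ [_ [_ H]]]]] _]; case/andP: (H i j). Qed.
Lemma x_cap j : \sum_i x i j * s i <= c j.
Proof. by case: xy_opt => [[_ [_ [_ [H _]]]] _]. Qed.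
Lemma x_big i j : c j < s i -> x i j = 0.
Proof. by case: xy_opt => [[_ [_ [_ [_ [H _]]]]] _]; apply: H. Qed.
Lemma y_ge0 k : 0 <= y k.
Proof. by case: xy_opt => [[H _] _]. Qed.
Lemma y_le1 k : y k <= 1.
Proof. by case: xy_opt => [[_ [_ [H _]]] _]. Qed.
Lemma y_le k : y k <= \sum_(j in T k) x (ik k) j.
Proof. by case: xy_opt => [[_ [H _]] _]. Qed.

Lemma d_ge0 j cl : 0 <= dd j cl.
Proof. by apply: sumr_ge0 => i _; exact: x_ge0. Qed.

Lemma d_ge_x j cl i : inP' j cl i -> x i j <= dd j cl.
Proof.
move=> Hi; rewrite /d (bigD1 i) //= lerDl; apply: sumr_ge0 => ? _; exact: x_ge0.
Qed.

Lemma ps_ge0 sg i : 0 <= ps sg i.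
Proof.
rewrite /pslot; case: ifP => // _; apply: divr_ge0; [exact: x_ge0 | exact: d_ge0].
Qed.

Lemma ps_sum sg : \sum_i ps sg i = if dd (snode sg) (scls sg) == 0 then 0 else 1.
Proof.
rewrite /pslot -big_mkcond /= -mulr_suml -/(d s c x (snode sg) (scls sg)).
case: eqP => [->|/eqP H]; first by rewrite mul0r.
by rewrite divff.
Qed.

Lemma ps_sum_le1 sg : \sum_i ps sg i <= 1.
Proof. by rewrite ps_sum; case: ifP. Qed.

Definition Lp j := \sum_(i | inP' j Plus i) s i * x i j.
Definition Lm j := \sum_(i | inP' j Minus i) s i * x i j.
Definition As j := \sum_(i | s i <= c j * beta R) s i * x i j.

Lemma sx_ge0 i j : 0 <= s i * x i j.
Proof. by apply: mulr_ge0; [exact: ltW | exact: x_ge0]. Qed.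

Lemma As_ge0 j : 0 <= As j.
Proof. by apply: sumr_ge0 => i _; exact: sx_ge0. Qed.

Lemma load_plus j : c j * dd j Plus <= 2 * Lp j.
Proof.
rewrite /d /Lp mulr_sumr mulr_sumr; apply: ler_sum => i /andP[h1 h2].
have := x_ge0 i j; have := c_pos j; nra.
Qed.

Lemma load_minus j : c j * dd j Minus <= 4 * Lm j.
Proof.
rewrite /d /Lm mulr_sumr mulr_sumr; apply: ler_sum => i /andP[h1 h2].
have := x_ge0 i j; have := c_pos j; nra.
Qed.

Lemma load_total j : Lp j + Lm j + As j <= c j.
Proof.
apply: le_trans (x_cap j).
rewrite /Lp /Lm /As [X in X + _ + _]big_mkcond [X in _ + X + _]big_mkcond [X in _ + _ + X]big_mkcond.
rewrite -!big_split /=.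
apply: ler_sum => i _.
have := sx_ge0 i j; rewrite [x i j * s i]mulrC /beta.
case: ifP => [/andP[a1 a2]|_]; case: ifP => [/andP[b1 b2]|_]; case: ifP => // b3 ?; lra.
Qed.

Lemma Lp_ge0 j : 0 <= Lp j.
Proof. by apply: sumr_ge0 => i _; exact: sx_ge0. Qed.
Lemma Lm_ge0 j : 0 <= Lm j.
Proof. by apply: sumr_ge0 => i _; exact: sx_ge0. Qed.

Definition P3 j := 1 - delta R * dd j Plus - delta R * hh j.

Lemma P3_bounds j : As j <= c j * P3 j /\ c j / 4 + As j / 2 <= c j * P3 j.
Proof.
have hp := load_plus j; have hm := load_minus j; have ht := load_total j.
have hdm := d_ge0 j Minus; have hdp := d_ge0 j Plus.
have cj := c_pos j; have lp := Lp_ge0 j; have lm := Lm_ge0 j.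
have [h1 h2] : c j * hh j <= 4 * Lm j /\ c j * hh j <= c j + 2 * Lm j.
  rewrite /h; case: ifP => hd; split; nra.
rewrite /P3 /delta; split; nra.
Qed.

Lemma h_ge0 j : 0 <= hh j.
Proof. rewrite /h; have := d_ge0 j Minus; case: ifP => _; lra. Qed.

Lemma P3_ge0 j : 0 <= P3 j.
Proof.
have [h1 _] := P3_bounds j; have := As_ge0 j; have := c_pos j.
move=> cj a0; rewrite -(pmulr_rge0 _ cj); lra.
Qed.

Lemma pz_ge0 j k : 0 <= pz j k.
Proof.
rewrite /pzeta; case: k => [[|[|k]] hk] /=.
- by apply: mulr_ge0; [rewrite /delta; lra | exact: d_ge0].
- by apply: mulr_ge0; [rewrite /delta; lra | exact: h_ge0].
- by have := P3_ge0 j; rewrite /P3.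
Qed.

Lemma pz_sum j : \sum_k pz j k = 1.
Proof. by rewrite !big_ord_recl big_ord0 /pzeta /=; lra. Qed.


Lemma prod_const_seq (I : Type) (l : seq I) (a : R) : \prod_(t <- l) a = a ^+ size l.
Proof. by elim: l => [|b l IH]; rewrite ?big_nil ?expr0 // big_cons IH exprS. Qed.

Lemma prod_01 (I : eqType) (l : seq I) (F : I -> R) :
  (forall b, b \in l -> 0 <= F b <= 1) -> 0 <= \prod_(b <- l) F b <= 1.
Proof.
elim: l => [|b l IH] HF; first by rewrite big_nil ler01 lexx.
rewrite big_cons.
have /andP[h0 h1] := HF b (mem_head _ _).
have /andP[p0 p1] : 0 <= \prod_(j <- l) F j <= 1.
  by apply: IH => a al; apply: HF; rewrite inE al orbT.
apply/andP; split; nra.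
Qed.

Lemma prod_01T (I : Type) (l : seq I) (F : I -> R) :
  (forall b, 0 <= F b <= 1) -> 0 <= \prod_(b <- l) F b <= 1.
Proof.
move=> HF; apply/andP; split.
- by apply: prodr_ge0 => b _; case/andP: (HF b).
- by apply: prodr_ile1 => b _; exact: HF.
Qed.

Lemma prod_le_mem (I : eqType) (l : seq I) (F : I -> R) a :
  (forall b, b \in l -> 0 <= F b <= 1) -> a \in l -> \prod_(b <- l) F b <= F a.
Proof.
elim: l => [//|b l IH] HF; rewrite big_cons inE => /orP [/eqP->|al].
- have /andP[h0 h1] := HF b (mem_head _ _).
  have /andP[p0 p1] : 0 <= \prod_(j <- l) F j <= 1.
    by apply: prod_01 => i il; apply: HF; rewrite inE il orbT.
  nra.
- have /andP[h0 h1] := HF b (mem_head _ _).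
  have /andP[p0 p1] : 0 <= \prod_(j <- l) F j <= 1.
    by apply: prod_01 => i il; apply: HF; rewrite inE il orbT.
  have := IH (fun i il => HF i ltac:(by rewrite inE il orbT)) al.
  nra.
Qed.

Definition ind k (sg : slot V) (i : S) : R := (~~ ((snode sg \in T k) && (i == ik k)))%:R.
Definition rr k sg := \sum_i ps sg i * ind k sg i.
Definition tt sg := \sum_i ps sg i.
Definition GG (F : slot V -> R) j kk := \prod_(sg <- slots_at s c x Q j kk) F sg.
Definition MM F j := \sum_kk pz j kk * GG F j kk.

Lemma ind01 k sg i : 0 <= ind k sg i <= 1.
Proof. by rewrite /ind; case: (~~ _); rewrite /= ?lexx ?ler01. Qed.

Lemma rr_01 k sg : 0 <= rr k sg <= 1.
Proof.
apply/andP; split.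
- apply: sumr_ge0 => i _; apply: mulr_ge0; [exact: ps_ge0 | by case/andP: (ind01 k sg i)].
- apply: le_trans (ps_sum_le1 sg); apply: ler_sum => i _.
  have := ps_ge0 sg i; case/andP: (ind01 k sg i); nra.
Qed.

Lemma tt_01 sg : 0 <= tt sg <= 1.
Proof.
apply/andP; split; last exact: ps_sum_le1.
by apply: sumr_ge0 => i _; exact: ps_ge0.
Qed.

Lemma rr_node k sg : snode sg \in T k -> rr k sg = tt sg - ps sg (ik k).
Proof.
move=> hT; rewrite /rr /tt (bigD1 (ik k)) //= [X in _ = X - _](bigD1 (ik k)) //=.
rewrite /ind hT eqxx /= mulr0 add0r addrC addrK.
by apply: eq_bigr => i hi; rewrite (negbTE hi) mulr1.
Qed.

Lemma GG_01 F j kk : (forall sg, 0 <= F sg <= 1) -> 0 <= GG F j kk <= 1.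
Proof. by move=> HF; apply: prod_01T. Qed.

Lemma MM_le F j kk0 : (forall sg, 0 <= F sg <= 1) ->
  MM F j <= 1 - pz j kk0 * (1 - GG F j kk0).
Proof.
move=> HF.
suff : pz j kk0 * (1 - GG F j kk0) <= 1 - MM F j by lra.
have -> : 1 - MM F j = \sum_kk pz j kk * (1 - GG F j kk).
  rewrite -{1}(pz_sum j) /MM -sumrB; apply: eq_bigr => kk _; ring.
rewrite (bigD1 kk0) //=.
have : 0 <= \sum_(kk | kk != kk0) pz j kk * (1 - GG F j kk).
  apply: sumr_ge0 => kk _; apply: mulr_ge0; first exact: pz_ge0.
  by case/andP: (@GG_01 F j kk HF); lra.
lra.
Qed.

Lemma MM_01 F j : (forall sg, 0 <= F sg <= 1) -> 0 <= MM F j <= 1.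
Proof.
move=> HF; apply/andP; split.
- apply: sumr_ge0 => kk _; apply: mulr_ge0; first exact: pz_ge0.
  by case/andP: (@GG_01 F j kk HF).
- have := @MM_le F j ord0 HF; have := pz_ge0 j ord0.
  case/andP: (@GG_01 F j ord0 HF); nra.
Qed.

Lemma rr_val k j cl t : j \in T k -> inP' j cl (ik k) -> 0 < x (ik k) j ->
  rr k (j, cl, t) = 1 - x (ik k) j / dd j cl.
Proof.
move=> hT hi hx; rewrite rr_node //.
have hd : dd j cl != 0.
  have h1 := @d_ge_x j cl (ik k) hi; apply/eqP => e; rewrite e in h1; lra.
rewrite /tt ps_sum /snode /scls /= (negbTE hd).
by rewrite /pslot /snode /scls /= hi.
Qed.


Lemma find_q (sv cv : R) : 0 < sv -> 0 < cv -> sv <= cv * beta R ->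
  exists q, (0 < q)%N /\ gamma R ^+ q * cv * beta R < sv /\ sv <= gamma R ^+ q.-1 * cv * beta R.
Proof.
move=> sv0 cv0 hs.
have ex : exists n, gamma R ^+ n * cv * beta R < sv.
  pose z := Num.ceil (cv / sv).
  have z0 : 0 <= z.
    rewrite /z ceil_ge0; have : 0 <= cv / sv by apply: divr_ge0; lra.
    move=> ?; lra.
  exists `|z|%N.
  set n := `|z|%N.
  have hn : cv / sv <= n%:R by rewrite /n natr_absz ger0_norm //; exact: ceil_ge.
  have hn' : cv <= n%:R * sv by rewrite -ler_pdivrMr.
  have g0 : 0 <= gamma R ^+ n by apply: exprn_ge0; rewrite /gamma; lra.
  have g2 : gamma R ^+ n * (2 ^+ n) = 1.
    rewrite -exprMn /gamma; have -> : (1/2 * 2 : R) = 1 by lra.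
    by rewrite expr1n.
  have n2 : (n.+1%:R : R) <= 2 ^+ n.
    have := ltn_expl n (isT : (1 < 2)%N); rewrite -(ler_nat R) natrX => H; exact: H.
  have g3 : gamma R ^+ n * n.+1%:R <= 1.
    by apply: le_trans (ler_wpM2l g0 n2) _; rewrite g2.
  rewrite -natr1 in g3.
  rewrite /beta.
  have : gamma R ^+ n * cv <= gamma R ^+ n * (n%:R * sv) by apply: ler_wpM2l.
  nra.
case: (@ex_minnP (fun n => gamma R ^+ n * cv * beta R < sv) ex) => q Hq Hmin.
exists q.
case: q Hq Hmin => [|q] Hq Hmin.
  by move: Hq; rewrite expr0 mul1r; lra.
split => //; split => //=.
case: (lerP sv (gamma R ^+ q * cv * beta R)) => // hlt.
by have := Hmin q hlt; rewrite ltnn.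
Qed.


Lemma As_ge i j : s i <= c j * beta R -> s i * x i j <= As j.
Proof.
move=> hi; rewrite /As (bigD1 i) //= lerDl; apply: sumr_ge0 => ? _; exact: sx_ge0.
Qed.

Lemma nslots_ge j q : 0 <= vv s c x j * dd j (Defs.Num q) ->
  vv s c x j * dd j (Defs.Num q) <= (nslots s c x j q)%:R.
Proof.
move=> h0; rewrite /nslots natr_absz ger0_norm; first exact: ceil_ge.
by rewrite ceil_ge0; lra.
Qed.

Lemma node_bound k j : j \in T k -> MM (rr k) j <= 1 - 3/16 * x (ik k) j.
Proof.
move=> hT; set i := ik k.
have HF : forall sg, 0 <= rr k sg <= 1 := rr_01 k.
have xi0 := x_ge0 i j; have xi1 := x_le1 i j.
have [x0|xpos] : x i j = 0 \/ 0 < x i j.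
  by case: (lerP (x i j) 0) => h; [left; lra | right].
  rewrite x0; case/andP: (@MM_01 (rr k) j HF) => _; lra.
have sc : s i <= c j.
  by case: (lerP (s i) (c j)) => // h; move: (@x_big i j h); lra.
have cj := c_pos j; have si := s_pos i.
case: (ltrP (c j / 2) (s i)) => hs1.
  have hin : inP' j Plus i by rewrite /inP hs1 sc.
  have := @MM_le (rr k) j ord0 HF.
  have -> : GG (rr k) j ord0 = 1 - x i j / dd j Plus.
    by rewrite /GG /slots_at /= big_seq1 rr_val.
  rewrite /pzeta /= /delta.
  have hd := @d_ge_x j Plus i hin.
  have e : dd j Plus * (x i j / dd j Plus) = x i j by rewrite mulrC divfK //; lra.
  nra.
case: (ltrP (c j / 4) (s i)) => hs2.
  have hin : inP' j Minus i by rewrite /inP hs2 hs1.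
  have := @MM_le (rr k) j (Ordinal (isT : (1 < 3)%N)) HF.
  have hd := @d_ge_x j Minus i hin.
  set p := x i j / dd j Minus.
  have -> : GG (rr k) j (Ordinal (isT : (1 < 3)%N)) = (1 - p) * (1 - p).
    by rewrite /GG /slots_at /= !big_cons big_nil !rr_val // mulr1.
  have e : dd j Minus * p = x i j by rewrite /p mulrC divfK //; lra.
  have p1 : p <= 1 by rewrite /p ler_pdivrMr; lra.
  have p0 : 0 < p by rewrite /p divr_gt0 //; lra.
  rewrite /pzeta /= /delta /h.
  case: ifP => hd2; first nra.
  have hd2' : 2 <= dd j Minus by move: hd2 => /negbT; rewrite -leNgt.
  have p2 : p <= 1/2 by nra.
  nra.
have hsm : s i <= c j * beta R by rewrite /beta; lra.
have [q [q0 [hq1 hq2]]] := @find_q (s i) (c j) (s_pos i) (c_pos j) hsm.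
have hin : inP' j (Defs.Num q) i by rewrite /inP hq1 hq2.
have hd := @d_ge_x j (Defs.Num q) i hin.
set dq := dd j (Defs.Num q) in hd *.
have hA : s i * x i j <= As j := @As_ge i j hsm.
have A0 : 0 < As j by have := mulr_gt0 si xpos; lra.
set v := vv s c x j.
have ve : v = delta R * c j / As j by [].
have v0 : 0 < v by rewrite ve /delta; apply: divr_gt0 => //; lra.
set n := nslots s c x j q.
have hn : v * dq <= n%:R by apply: nslots_ge; apply: mulr_ge0; [exact: ltW | exact: d_ge0].
have n1 : (0 < n)%N.
  rewrite lt0n; apply/eqP => e; rewrite e in hn; have := mulr_gt0 v0 (_ : 0 < dq).
  by move=> /(_ ltac:(lra)); lra.
have qQ : q \in iota 1 Q.
  rewrite mem_iota q0 /= add1n ltnS; case: (leqP q Q) => // hQ.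
  by move: n1; rewrite /n HQ.
set p := x i j / dq.
have e : dq * p = x i j by rewrite /p mulrC divfK //; lra.
have p1 : p <= 1 by rewrite /p ler_pdivrMr; lra.
have p0 : 0 < p by rewrite /p divr_gt0 //; lra.
have hG : GG (rr k) j (Ordinal (isT : (2 < 3)%N)) <= (1 - p) ^+ n.
  rewrite /GG /slots_at /= big_flatten /= big_map.
  apply: le_trans (@prod_le_mem nat (iota 1 Q) (fun q' => \prod_(sg <- [seq (j, Defs.Num q', t) | t <- iota 0 (nslots s c x j q')]) rr k sg) q _ qQ) _.
    by move=> b _; apply: prod_01T.
  rewrite /= big_map.
  rewrite (eq_bigr (fun _ => 1 - p)); last by move=> t _; rewrite rr_val.
  by rewrite prod_const_seq size_iota.
have hE : (1 - p) ^+ n <= expR (- (v * x i j)).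
  apply: le_trans (_ : expR (- p) ^+ n <= _).
    apply: lerXn2r; rewrite ?nnegrE; try lra; first exact: expR_ge0.
    have := expR_ge1Dx (- p); lra.
  rewrite -expRM_natr ler_expR.
  have : v * x i j <= p * n%:R.
    have : p * (v * dq) <= p * n%:R by apply: ler_wpM2l; lra.
    nra.
  lra.
have hc : expR (- (v * x i j)) <= x i j * expR (- v) + (1 - x i j).
  have -> : - (v * x i j) = x i j * (- v) by ring.
  exact: chord.
have hP := P3_bounds j.
case: hP => hP1 hP2.
have hs := @small_num R (P3 j) v v0.
have h4 : 1 <= 4 * v * P3 j.
  have -> : 4 * v * P3 j = (c j * P3 j) / As j.
    by rewrite ve /delta; field; rewrite ?(lt0r_neq0 A0) ?(lt0r_neq0 cj).
  by rewrite ler_pdivlMr // mul1r.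
have h8 : 1/4 + 1/(8*v) <= P3 j.
  rewrite -(ler_pM2l cj).
  have -> : c j * (1/4 + 1/(8*v)) = c j / 4 + As j / 2.
    by rewrite ve /delta; field; rewrite ?(lt0r_neq0 A0) ?(lt0r_neq0 cj).
  done.
have hs' := hs h4 h8.
have := @MM_le (rr k) j (Ordinal (isT : (2 < 3)%N)) HF.
have -> : pz j (Ordinal (isT : (2 < 3)%N)) = P3 j by [].
have P0 := P3_ge0 j.
have eE := expR_ge0 (- v).
nra.
Qed.


Local Notation sl z m := (@slot_of R S V s c x Q z m).

Lemma pz_tt j kk : pz j kk * GG tt j kk = pz j kk.
Proof.
case: kk => [[|[|kk']] hk]; rewrite /GG /slots_at /=.
- rewrite big_seq1 /tt ps_sum /snode /scls /= /pzeta /=.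
  by case: eqP => [->|_]; rewrite ?mulr0 ?mul0r ?mulr1.
- rewrite !big_cons big_nil /tt !ps_sum /snode /scls /= /pzeta /= /h.
  case: eqP => [->|_]; rewrite ?mulr1 //.
  by rewrite mulr0 mul0r; case: ifP => _; rewrite ?mul0r ?mulr0.
- rewrite big_flatten /= big_map big1 ?mulr1 // => q' _.
  rewrite big_map.
  case: (eqVneq (dd j (Defs.Num q')) 0) => hd.
  + by rewrite /nslots hd mulr0 ceil0 /= big_nil.
  + by apply: big1 => t _; rewrite /tt ps_sum /snode /scls /= (negbTE hd).
Qed.

Lemma MM_tt j : MM tt j = 1.
Proof. by rewrite /MM -(pz_sum j); apply: eq_bigr => kk _; rewrite pz_tt. Qed.

Lemma sum_tau_F z (F : slot V -> S -> R) :
  \sum_(tau : alloc s c x Q z) \prod_m F (sl z m) (tau m) = \prod_m \sum_i F (sl z m) i.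
Proof. by rewrite (bigA_distr_bigA (fun m i => F (sl z m) i)). Qed.

Lemma lambda_prod z (F : slot V -> R) :
  \prod_m F (sl z m) = \prod_j \prod_(sg <- slots_at s c x Q j (z j)) F sg.
Proof.
transitivity (\prod_(sg <- in_tuple (Lambda s c x Q z)) F sg).
  by rewrite big_tuple.
by rewrite /= /Lambda big_flatten /= big_map big_enum.
Qed.

Lemma sum_z (F : slot V -> R) :
  \sum_(z : cmap V) Pr_zeta s c x z * \prod_m F (sl z m) = \prod_j MM F j.
Proof.
rewrite /MM /GG (bigA_distr_bigA (fun j kk => pz j kk * \prod_(sg <- slots_at s c x Q j kk) F sg)).
apply: eq_bigr => z _.
by rewrite lambda_prod /Pr_zeta -big_split.
Qed.


Lemma prod_nat_bool (I : finType) (b : I -> bool) :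
  \prod_m ((b m)%:R : R) = ([forall m, b m])%:R.
Proof.
case: (boolP [forall m, b m]) => H.
- by rewrite big1 // => m _; move/forallP: H => ->.
- move: H; rewrite negb_forall => /existsP[m hm].
  by rewrite (bigD1 m) //= (negbTE hm) mul0r.
Qed.

Lemma notf z (tau : alloc s c x Q z) k :
  ((~~ ftau ik T tau k)%:R : R) = \prod_m ind k (sl z m) (tau m).
Proof.
rewrite /ind prod_nat_bool; congr ((nat_of_bool _)%:R).
rewrite /ftau negbK.
set F := [forall m, _].
have H1 : T k :&: Xtau tau (ik k) == set0 -> F.
  move/eqP => H; apply/forallP => m; apply/negP => /andP[hT /eqP ht].
  have : snode (sl z m) \in T k :&: Xtau tau (ik k).
    by rewrite inE hT inE; apply/existsP; exists m; rewrite eqxx ht eqxx.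
  by rewrite H inE.
have H2 : F -> T k :&: Xtau tau (ik k) == set0.
  move/forallP => H; apply/eqP/setP => j; rewrite !inE; apply/negP.
  move=> /andP[hT /existsP[m /andP[/eqP hn /eqP ht]]].
  by have := H m; rewrite hn hT ht eqxx.
case: (boolP F) => hF; first exact: (H2 hF).
apply/negbTE/negP => /H1 hh; by rewrite hh in hF.
Qed.

Lemma inner_k z k :
  \sum_(tau : alloc s c x Q z) Pr_tau tau * (ftau ik T tau k)%:R =
  \prod_m tt (sl z m) - \prod_m rr k (sl z m).
Proof.
have e : forall tau : alloc s c x Q z, Pr_tau tau * (ftau ik T tau k)%:R =
    Pr_tau tau - \prod_m (ps (sl z m) (tau m) * ind k (sl z m) (tau m)).
  move=> tau; rewrite big_split /= -notf /Pr_tau.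
  by case: (ftau _ _ _ _); rewrite /= ?mulr1 ?mulr0 ?subr0 ?subrr.
rewrite (eq_bigr _ (fun tau _ => e tau)) sumrB.
rewrite /Pr_tau (sum_tau_F z ps) (sum_tau_F z (fun sg i => ps sg i * ind k sg i)).
done.
Qed.

Lemma Ecov k :
  \sum_(z : cmap V) Pr_zeta s c x z * \sum_(tau : alloc s c x Q z) Pr_tau tau * (ftau ik T tau k)%:R
  = 1 - \prod_j MM (rr k) j.
Proof.
rewrite (eq_bigr (fun z : cmap V => Pr_zeta s c x z * \prod_m tt (sl z m) - Pr_zeta s c x z * \prod_m rr k (sl z m))); last first.
  by move=> z _; rewrite (inner_k z k) mulrBr.
rewrite sumrB !sum_z.
by rewrite [X in X - _]big1 // => j _; exact: MM_tt.
Qed.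

Lemma cov_bound k : (1 - expR (-1)) / 4 * y k <= 1 - \prod_j MM (rr k) j.
Proof.
apply: le_trans (@final_num R (y k) (y_ge0 k) (y_le1 k)) _.
suff: \prod_j MM (rr k) j <= expR (- (3/16) * y k) by lra.
rewrite (bigID (fun j => j \in T k)) /=.
have HF := rr_01 k.
have h1 : 0 <= \prod_(j | j \in T k) MM (rr k) j.
  by apply: prodr_ge0 => j _; case/andP: (@MM_01 (rr k) j HF).
have h0 : 0 <= \prod_(j | j \notin T k) MM (rr k) j.
  by apply: prodr_ge0 => j _; case/andP: (@MM_01 (rr k) j HF).
have h2 : \prod_(j | j \notin T k) MM (rr k) j <= 1.
  by apply: prodr_ile1 => j _; exact: MM_01.
have h3 : \prod_(j | j \in T k) MM (rr k) j <= \prod_(j | j \in T k) expR (- (3/16) * x (ik k) j).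
  apply: ler_prod => j hj; apply/andP; split; first by case/andP: (@MM_01 (rr k) j HF).
  apply: le_trans (@node_bound k j hj) _.
  have := expR_ge1Dx (- (3/16) * x (ik k) j); lra.
have h4 : \prod_(j | j \in T k) expR (- (3/16) * x (ik k) j) <= expR (- (3/16) * y k).
  rewrite -expR_sum ler_expR -mulr_sumr.
  have := y_le k; lra.
nra.
Qed.

Lemma expected_eq : expected_gain s c ik T w x Q = \sum_k w k * (1 - \prod_j MM (rr k) j).
Proof.
rewrite /expected_gain.
transitivity (\sum_(z : cmap V) \sum_k w k * (Pr_zeta s c x z *
   \sum_(tau : alloc s c x Q z) Pr_tau tau * (ftau ik T tau k)%:R)).
  apply: eq_bigr => z _; rewrite /gain.
  under eq_bigr => tau _ do rewrite mulr_sumr.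
  rewrite exchange_big /= mulr_sumr; apply: eq_bigr => k _.
  rewrite mulrCA; congr (_ * _).
  rewrite mulr_sumr; apply: eq_bigr => tau _; ring.
rewrite exchange_big /=; apply: eq_bigr => k _.
by rewrite -mulr_sumr Ecov.
Qed.

Lemma reward_le X : feasible s c X -> reward ik T w X <= LP_obj w y.
Proof.
move=> /forallP hX.
pose x' i j : R := (j \in X i)%:R.
pose y' k : R := (T k :&: X (ik k) != set0)%:R.
have hx01 : forall i j, 0 <= x' i j <= 1.
  by move=> i j; rewrite /x'; case: (_ \in _); rewrite /= ?lexx ?ler01.
have hcap : forall j, \sum_i x' i j * s i <= c j.
  by move=> j; apply: le_trans (hX j); rewrite le_eqVlt; apply/orP; left; apply/eqP;
     apply: eq_bigr => i _; rewrite mulrC.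
have hf : LP_feasible s c ik T x' y'.
  split; first by move=> k; rewrite /y'; case: (_ != _).
  split.
    move=> k; rewrite /y'; case: (set0Pn (T k :&: X (ik k))) => [[j hj]|_]; last first.
      by rewrite /=; apply: sumr_ge0 => j _; case/andP: (hx01 (ik k) j).
    move: hj; rewrite inE => /andP[hj1 hj2].
    rewrite (bigD1 j) //= /x' hj2 lerDl; apply: sumr_ge0 => i _.
    by case/andP: (hx01 (ik k) i).
  split; first by move=> k; rewrite /y'; case: (_ != _); rewrite /= ?lexx ?ler01.
  split; first exact: hcap.
  split; last exact: hx01.
  move=> i j hij; rewrite /x'; case: (boolP (j \in X i)) => // hj.
  have := hcap j; rewrite (bigD1 i) //= /x' hj mul1r.
  have : 0 <= \sum_(i0 | i0 != i) (j \in X i0)%:R * s i0.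
    by apply: sumr_ge0 => i0 _; apply: mulr_ge0; [exact: ler0n | exact: ltW].
  lra.
case: xy_opt => _ /(_ x' y' hf).
apply: le_trans; rewrite le_eqVlt; apply/orP; left; apply/eqP.
by rewrite /reward /LP_obj; apply: eq_bigr => k _; rewrite mulrC.
Qed.

Lemma OPT_le : OPT s c ik T w <= LP_obj w y.
Proof.
rewrite /OPT; apply: bigmax_le.
  by apply: sumr_ge0 => k _; apply: mulr_ge0; [exact: y_ge0 | exact: ltW].
by move=> X hX; exact: reward_le.
Qed.

Lemma main_bound : (1 - expR (-1)) * OPT s c ik T w / 4 <= expected_gain s c ik T w x Q.
Proof.
rewrite expected_eq.
have b0 : 0 <= (1 - expR (-1)) / 4 :> R.
  have : expR (-1) <= 1 :> R by rewrite expR_le1; lra.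
  lra.
apply: le_trans (_ : (1 - expR (-1)) / 4 * LP_obj w y <= _).
  have := ler_wpM2l b0 OPT_le; set o := OPT _ _ _ _ _; move=> H.
  by have -> : (1 - expR (-1)) * o / 4 = (1 - expR (-1)) / 4 * o by ring.
rewrite /LP_obj mulr_sumr; apply: ler_sum => k _.
have := cov_bound k; have := w_pos k; nra.
Qed.

End Main.

Theorem theorem10 (R : realType) (S V U : finType)
  (s : S -> R) (c : V -> R) (ik : U -> S) (T : U -> {set V}) (w : U -> R)
  (s_pos : forall i, 0 < s i) (c_pos : forall j, 0 < c j) (w_pos : forall k, 0 < w k)
  (x : S -> V -> R) (y : U -> R)
  (xy_opt : LP_optimal s c ik T w x y)
  (Q : nat) (HQ : forall (j : V) (q : nat), (Q < q)%N -> nslots s c x j q = 0%N) :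
  expected_gain s c ik T w x Q >= (1 - expR (-1)) * OPT s c ik T w / 4.
Proof. exact: (@main_bound R S V U s c ik T w s_pos c_pos w_pos x y xy_opt Q HQ). Qed.
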